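(* Let $P$ be an interrupt-driven program as described in the context. Let $l$ be a load of a global variable $v$ in handler $T_i$, and let $s$ be a store to $v$ in handler $T_j$ with $i \neq j$. Suppose at least one of the following holds: (1) $l$ is a covered load and $s$ is an intercepted store; (2) $l$ is a covered load and $p_j \le p_i$; (3) $s$ is an intercepted store and $p_i \le p_j$. Then in no execution of $P$ under the interrupt semantics does an executed instance of $l$ read from an executed instance of $s$. That is, $\mathrm{MustNotReadFrom}(l,s)$ is sound.
   Context: An interrupt-driven program $P$ consists of finitely many interrupt handlers $T_1,\dots,T_n$. Each handler $T_i$ is a sequential program given by a control-flow graph $\langle N_i, n^i_0, \delta_i\rangle$ with entry node $n^i_0$ and an exit node. Handlers access local variables and shared global variables. Each handler $T_i$ has an integer priority $p_i$, and each statement belongs to exactly one handler. An invocation of $T_i$ executes statements one at a time along a path of its control-flow graph from $n^i_0$, and it completes on reaching the exit node. Interrupt semantics: an execution is a finite sequence of steps, each executing one statement of some invocation. Invocations of any handler may be started any number of times. At every moment, the started-but-not-completed invocations form a stack whose handler priorities are strictly increasing from bottom to top. Only the top invocation may take a step. A new invocation of $T_j$ may be started only if the stack is empty or $p_j$ is strictly greater than the priority of the top invocation's handler. An invocation is popped when it completes. Thus a handler can only be preempted by a handler of strictly higher priority, and invocations nest. Reads-from: in an execution, an executed instance of a load of $v$ reads from an executed instance of a store to $v$ if that store instance is the last store to $v$ executed before the load instance. Dominance and post-dominance are taken within a single handler's control-flow graph. A statement $a$ dominates $b$ if every path from the entry node to $b$ passes through $a$. A statement $a \neq b$ post-dominates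 $b$ if every path from $b$ to the exit node passes through $a$ after $b$. A load $l$ of $v$ in $T_i$ is a covered load if some store to $v$ in $T_i$ dominates $l$. A store $s$ to $v$ in $T_j$ is an intercepted store if some other store $s_2 \neq s$ to $v$ in $T_j$ post-dominates $s$. *)

(* Defs.v *)
From mathcomp Require Import all_boot all_order all_algebra.
Set Implicit Arguments. Unset Strict Implicit. Unset Printing Implicit Defensive.
Import Order.TTheory GRing.Theory Num.Theory.

(* Global variables are named by nat.  Statements touching only local
   variables (or doing no memory access) are [AOther]. *)
Inductive action := ALoad of nat | AStore of nat | AOther.

(* Control-flow graph of one handler; nodes (= statements) are nats. *)
Record cfg := Cfg {
  entry : nat;
  exit  : nat;
  edge  : rel nat;
  act   : nat -> action
}.

(* CFG paths: [x :: p] with [path (edge c) x p]. *)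
Definition dominates (c : cfg) (a b : nat) : Prop :=
  forall p : seq nat, path (edge c) (entry c) p -> last (entry c) p = b ->
    a \in entry c :: p.

Definition postdominates (c : cfg) (a b : nat) : Prop :=
  a <> b /\
  forall p : seq nat, path (edge c) b p -> last b p = exit c -> a \in p.

Definition covered_load (c : cfg) (l : nat) (v : nat) : Prop :=
  act c l = ALoad v /\ exists s, act c s = AStore v /\ dominates c s l.

Definition intercepted_store (c : cfg) (s : nat) (v : nat) : Prop :=
  act c s = AStore v /\
  exists s2, s2 <> s /\ act c s2 = AStore v /\ postdominates c s2 s.

Section Semantics.
Variables (I : finType) (P : I -> cfg) (prio : I -> int).

(* A frame is an invocation: its handler and the next node to execute.
   A stack lists frames from top to bottom. *)
Definition frame := (I * nat)%type.
Definition stack := seq frame.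

Definition can_start (st : stack) (j : I) : Prop :=
  match st with
  | [::] => True
  | (i, _) :: _ => (prio i < prio j)%R
  end.

(* Label [None]: a new invocation of
   some handler starts; label [Some (i, n)]: the top invocation (of handler
   [i]) executes statement [n]; it then either completes (n is the exit
   node) or moves to a CFG successor of n. *)
Definition step (st : stack) (lbl : option frame) (st' : stack) : Prop :=
  (exists j, lbl = None /\ can_start st j /\ st' = (j, entry (P j)) :: st)
  \/
  (exists i n rest, st = (i, n) :: rest /\ lbl = Some (i, n) /\
     ((n = exit (P i) /\ st' = rest) \/
      (n <> exit (P i) /\ exists m, edge (P i) n m /\ st' = (i, m) :: rest))).

Definition execution (sts : seq stack) (lbls : seq (option frame)) : Prop :=
  size sts = (size lbls).+1 /\ nth [::] sts 0 = [::] /\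
  forall k, k < size lbls ->
    step (nth [::] sts k) (nth None lbls k) (nth [::] sts k.+1).

Definition is_store_to (v : nat) (lbl : option frame) : bool :=
  match lbl with
  | Some (i, n) => if act (P i) n is AStore w then w == v else false
  | None => false
  end.

Definition reads_from (lbls : seq (option frame)) (v : nat)
    (j : I) (s : nat) (a : nat) (i : I) (l : nat) (b : nat) : Prop :=
  a < b /\ b < size lbls /\
  nth None lbls a = Some (j, s) /\ nth None lbls b = Some (i, l) /\
  act (P j) s = AStore v /\ act (P i) l = ALoad v /\
  forall c, a < c -> c < b -> ~~ is_store_to v (nth None lbls c).

End Semantics.

(* Main.v *)
Require Import Defs.
From mathcomp Require Import all_boot all_order all_algebra.
From mathcomp Require Import zify.
Import Order.TTheory GRing.Theory Num.Theory.

Definition okst (I : finType) (prio : I -> int) (st : stack I) :=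
  sorted (fun f g : frame I => (prio g.1 < prio f.1)%R) st.
Arguments okst {I}.


Lemma okst_inv (I : finType) (P : I -> cfg) (prio : I -> int) sts lbls :
  execution P prio sts lbls ->
  forall k, k <= size lbls -> okst prio (nth [::] sts k).
Proof.
move=> [_ [H0 Hst]]; elim=> [|k IH] Hk; first by rewrite H0.
have Hk' : k < size lbls by [].
move: (Hst k Hk') (IH (ltnW Hk')).
case=> [[j0 [_ [Hcs ->]]] | [i0 [n0 [rest [-> [_ [[_ ->]|[_ [m [_ ->]]]]]]]]]].
- rewrite /okst /=; case: (nth [::] sts k) Hcs => [|[i1 n1] r] //= Hcs ->.
  by rewrite andbT.
- by rewrite /okst /= => /path_sorted.
- by rewrite /okst /=; case: rest.
Qed.
Arguments okst_inv {I P prio sts lbls}.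


Lemma okst_above (I : finType) (prio : I -> int) y X (i : I) x R :
  okst prio (y :: X ++ (i, x) :: R) -> (prio i < prio y.1)%R.
Proof.
move=> Hs.
have Htr : transitive (fun f g : frame I => (prio g.1 < prio f.1)%R).
  by move=> b a c H1 H2; apply: lt_trans H2 H1.
have Hsub : subseq [:: y; (i, x)] (y :: X ++ (i, x) :: R).
  by rewrite /= eqxx sub1seq mem_cat mem_head orbT.
by have /= := subseq_sorted Htr Hsub Hs; rewrite andbT.
Qed.
Arguments okst_above {I prio y X i x R}.


Lemma lbl_top (I : finType) (P : I -> cfg) (prio : I -> int) sts lbls k f :
  execution P prio sts lbls -> k < size lbls -> nth None lbls k = Some f ->
  exists rest, nth [::] sts k = f :: rest.
Proof.
move=> [_ [_ Hst]] Hk Hl.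
case: (Hst k Hk) => [[j0 [Hl' _]] | [i0 [n0 [rest [Est [Hl' _]]]]]].
- by rewrite Hl in Hl'.
- by exists rest; rewrite Est; rewrite Hl in Hl'; case: Hl' => ->.
Qed.
Arguments lbl_top {I P prio sts lbls k f}.


Lemma fwd (I : finType) (P : I -> cfg) (prio : I -> int) sts lbls (j : I) n R t :
  execution P prio sts lbls -> nth [::] sts t = (j, n) :: R ->
  forall d, t + d <= size lbls ->
  (forall k, t <= k <= t + d -> size R < size (nth [::] sts k)) ->
  exists X p, path (edge (P j)) n p /\
    nth [::] sts (t + d) = X ++ (j, last n p) :: R /\
    forall y, y \in n :: p -> y = last n p \/
      exists c, t <= c < t + d /\ nth None lbls c = Some (j, y).
Proof.
move=> [_ [_ Hst]] Ht; elim=> [|d IH] Hd Hsz.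
  exists [::], [::]; rewrite addn0 Ht /=; split=> //; split=> //.
  by move=> y; rewrite inE => /eqP ->; left.
rewrite addnS in Hd Hsz *.
have Hk : t + d < size lbls by [].
have [X [p [Hp [Ek Hy]]]] := IH (ltnW Hk) (fun k hk => Hsz k ltac:(lia)).
have Hsz' := Hsz (t + d).+1 ltac:(lia).
move: (Hst _ Hk) Hsz'; rewrite Ek.
case=> [[j0 [Hl [_ ->]]] | [i0 [n0 [rest [Est [Hl [[En ->]|[Ene [m [Hm ->]]]]]]]]]] Hsz'.
- exists ((j0, entry (P j0)) :: X), p; split=> //; split=> //.
  move=> y /Hy [->|[c [Hc Hlc]]]; [by left | right; exists c; split=> //; lia].
- case: X Est Ek Hy => [|x X'] /= Est Ek Hy.
    by case: Est => _ _ E; rewrite -E in Hsz'; rewrite ltnn in Hsz'.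
  case: Est => Ex Er; exists X', p; split=> //; split=> //.
  move=> y /Hy [->|[c [Hc Hlc]]]; [by left | right; exists c; split=> //; lia].
- case: X Est Ek Hy => [|x X'] /= Est Ek Hy.
    case: Est => Ej En0 ER; subst.
    exists [::], (rcons p m); split; first by rewrite rcons_path Hp Hm.
    rewrite last_rcons; split=> //.
    move=> y; rewrite -rcons_cons mem_rcons inE => /orP [/eqP ->|/Hy]; first by left.
    case=> [->|[c [Hc Hlc]]]; right.
      by exists (t + d); split; [lia | rewrite Hl].
    by exists c; split=> //; lia.
  case: Est => Ex Er; subst.
  exists ((i0, m) :: X'), p; split=> //; split=> //.
  move=> y /Hy [->|[c [Hc Hlc]]]; [by left | right; exists c; split=> //; lia].
Qed.
Arguments fwd {I P prio sts lbls j n R t}.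


Lemma bwd (I : finType) (P : I -> cfg) (prio : I -> int) sts lbls :
  execution P prio sts lbls ->
  forall k, k <= size lbls -> forall X (i : I) x R,
  nth [::] sts k = X ++ (i, x) :: R ->
  exists t0 p, t0 < k /\ nth [::] sts t0.+1 = (i, entry (P i)) :: R /\
    path (edge (P i)) (entry (P i)) p /\ last (entry (P i)) p = x /\
    (forall y, y \in entry (P i) :: p -> y = x \/
       exists c, t0 < c < k /\ nth None lbls c = Some (i, y)) /\
    (forall k', t0 < k' <= k -> size R < size (nth [::] sts k')).
Proof.
move=> [_ [H0 Hst]]; elim=> [|k IH] Hk X i x R Ek.
  by move: Ek; rewrite H0; case: X.
have Hk' : k < size lbls by [].
have HszE : size R < size (nth [::] sts k.+1) by rewrite Ek size_cat /= addnS ltnS leq_addl.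
move: (Hst k Hk'); rewrite Ek.
case=> [[j0 [Hl [_ Es]]] | [i0 [n0 [rest [Est [Hl [[En Es]|[Ene [m [Hm Es]]]]]]]]]].
- case: X Es Ek HszE => [|x' X'] /= Es Ek HszE.
    case: Es => Ei Ex ER; subst.
    exists k, [::]; split=> //; split; first by rewrite Ek.
    split=> //; split=> //; split.
      by move=> y; rewrite inE => /eqP ->; left.
    by move=> k' Hk''; have -> : k' = k.+1 by lia.
  case: Es => Ex' ES.
  have [t0 [p [Ht0 [E1 [Hp [Hlast [Hy Hs]]]]]]] := IH (ltnW Hk') X' i x R (esym ES).
  exists t0, p; split; first lia; do 3 (split=> //); split.
    by move=> y /Hy [->|[c [Hc Hlc]]]; [left | right; exists c; split=> //; lia].
  move=> k' Hk''; case: (ltnP k' k.+1) => H; first by apply: Hs; lia.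
  by have -> : k' = k.+1 by lia.
- have ES : nth [::] sts k = ((i0, n0) :: X) ++ (i, x) :: R by rewrite Est -Es.
  have [t0 [p [Ht0 [E1 [Hp [Hlast [Hy Hs]]]]]]] := IH (ltnW Hk') _ i x R ES.
  exists t0, p; split; first lia; do 3 (split=> //); split.
    by move=> y /Hy [->|[c [Hc Hlc]]]; [left | right; exists c; split=> //; lia].
  move=> k' Hk''; case: (ltnP k' k.+1) => H; first by apply: Hs; lia.
  by have -> : k' = k.+1 by lia.
- case: X Es Ek HszE => [|x' X'] /= Es Ek HszE.
    case: Es => Ei Ex ER; subst.
    have ES : nth [::] sts k = [::] ++ (i0, n0) :: rest by rewrite Est.
    have [t0 [p [Ht0 [E1 [Hp [Hlast [Hy Hs]]]]]]] := IH (ltnW Hk') _ i0 n0 rest ES.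
    exists t0, (rcons p m); split; first lia; split=> //.
    split; first by rewrite rcons_path Hp Hlast Hm.
    split; first by rewrite last_rcons.
    split.
      move=> y; rewrite -rcons_cons mem_rcons inE => /orP [/eqP ->|/Hy]; first by left.
      case=> [->|[c [Hc Hlc]]]; right.
        by exists k; split; [lia | rewrite Hl].
      by exists c; split=> //; lia.
    move=> k' Hk''; case: (ltnP k' k.+1) => H; first by apply: Hs; lia.
    by have -> : k' = k.+1 by lia.
  case: Es => Ex' ES; subst.
  have ES' : nth [::] sts k = ((i0, n0) :: X') ++ (i, x) :: R by rewrite Est.
  have [t0 [p [Ht0 [E1 [Hp [Hlast [Hy Hs]]]]]]] := IH (ltnW Hk') _ i x R ES'.
  exists t0, p; split; first lia; do 3 (split=> //); split.
    by move=> y /Hy [->|[c [Hc Hlc]]]; [left | right; exists c; split=> //; lia].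
  move=> k' Hk''; case: (ltnP k' k.+1) => H; first by apply: Hs; lia.
  by have -> : k' = k.+1 by lia.
Qed.
Arguments bwd {I P prio sts lbls}.


Lemma size_gt (T : Type) (X R : seq T) f : size R < size (X ++ f :: R).
Proof. by rewrite size_cat /= addnS ltnS leq_addl. Qed.

Lemma store_case (I : finType) (P : I -> cfg) (prio : I -> int) sts lbls v
    (i j : I) l s a b :
  execution P prio sts lbls -> i != j -> intercepted_store (P j) s v ->
  (prio i <= prio j)%R -> reads_from P lbls v j s a i l b -> False.
Proof.
move=> Hex Hij [Hs [s2 [Hs2s [Hs2 Hpd]]]] Hpr [Hab [Hb [La [Lb [_ [_ Hno]]]]]].
have [Ra ESa] := lbl_top Hex (ltn_trans Hab Hb) La.
have [Rb ESb] := lbl_top Hex Hb Lb.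
have Hok := okst_inv Hex.
pose q := fun k => (a < k <= b) && (size (nth [::] sts k) <= size Ra).
case: (boolP (has q (iota 0 b.+1))) => [/hasP [k0 _ Hk0] | Hn].
- have exq : exists k, q k by exists k0.
  case: (ex_minnP exq) => c /andP [/andP [Hac Hcb] Hc] Hmin.
  have Hsz : forall k, a <= k <= a + (c.-1 - a) ->
      size Ra < size (nth [::] sts k).
    move=> k Hk; case: (eqVneq k a) => [->|Hka]; first by rewrite ESa.
    rewrite ltnNge; apply/negP => H.
    have : c <= k by apply: Hmin; rewrite /q H andbT; apply/andP; split; lia.
    lia.
  have [X [p [Hp [Ek Hy]]]] := fwd Hex ESa (c.-1 - a) ltac:(lia) Hsz.
  have Ec : a + (c.-1 - a) = c.-1 by lia.
  rewrite Ec in Ek Hy.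
  have Hstep := (proj2 (proj2 Hex)) c.-1 ltac:(lia).
  rewrite Ek (prednK (leq_ltn_trans (leq0n a) Hac)) in Hstep.
  move: Hstep Hc.
  case=> [[j0 [Hl [_ ->]]] | [i0 [n0 [rest [Est [Hl [[En ->]|[Ene [m [Hm ->]]]]]]]]]] Hc.
  + by move: Hc; rewrite /= ltnNge => /negP; apply; apply: ltnW; apply: size_gt.
  + case: X Est Ek Hy => [|x X'] /= Est Ek Hy; last first.
      case: Est => _ Er; move: Hc; rewrite -Er.
      by rewrite leqNgt size_gt.
    case: Est => Ej En0 Er; subst i0.
    have Hex2 : last s p = exit (P j) by rewrite En0.
    have s2p : s2 \in p := (proj2 Hpd) p Hp Hex2.
    have [c' [Hc' Lc']] : exists c', a <= c' <= c.-1 /\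
        nth None lbls c' = Some (j, s2).
      case: (Hy s2 ltac:(by rewrite inE s2p orbT)) => [E|[c' [Hc' Lc']]].
        by exists c.-1; split; [lia | rewrite Hl -En0 -E].
      by exists c'; split=> //; lia.
    case: (eqVneq c' a) => [E|Hca].
      by move: Lc'; rewrite E La => -[E']; apply: Hs2s.
    have := Hno c' ltac:(lia) ltac:(lia).
    by rewrite Lc' /= Hs2 eqxx.
  + case: X Est Ek Hy => [|x X'] /= Est Ek Hy.
      by case: Est => _ _ Er; move: Hc; rewrite -Er /= ltnn.
    case: Est => _ Er; move: Hc; rewrite -Er /=.
    by rewrite leqNgt ltnS (ltnW (size_gt _ _ _ _)).
- have Hsz : forall k, a <= k <= a + (b - a) ->
      size Ra < size (nth [::] sts k).
    move=> k Hk; case: (eqVneq k a) => [->|Hka]; first by rewrite ESa.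
    have := hasPn Hn k; rewrite mem_iota add0n => /(_ ltac:(lia)).
    rewrite /q negb_and => /orP [H|]; first by exfalso; move: H; lia.
    by rewrite -ltnNge.
  have [X [p [Hp [Ek Hy]]]] := fwd Hex ESa (b - a) ltac:(lia) Hsz.
  have Eb : a + (b - a) = b by lia.
  rewrite Eb ESb in Ek.
  case: X Ek => [|y X'] /= Ek.
    by case: Ek => E _; move: Hij; rewrite E eqxx.
  case: Ek => Ey Er.
  have := Hok b (ltnW Hb); rewrite ESb Er => /okst_above /=.
  by rewrite ltNge Hpr.
Qed.
Arguments store_case {I P prio sts lbls v i j l s a b}.


Lemma load_case (I : finType) (P : I -> cfg) (prio : I -> int) sts lbls v
    (i j : I) l s a b :
  execution P prio sts lbls -> i != j -> covered_load (P i) l v ->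
  reads_from P lbls v j s a i l b -> (prio i < prio j)%R.
Proof.
move=> Hex Hij [Hl [s' [Hs' Hdom]]] [Hab [Hb [La [Lb [_ [_ Hno]]]]]].
have [Ra ESa] := lbl_top Hex (ltn_trans Hab Hb) La.
have [Rb ESb] := lbl_top Hex Hb Lb.
have ESb' : nth [::] sts b = [::] ++ (i, l) :: Rb by [].
have [t0 [p [Ht0 [E1 [Hp [Hlast [Hy Hs]]]]]]] := bwd Hex b (ltnW Hb) [::] i l Rb ESb'.
have s'in := Hdom p Hp Hlast.
have [c [Hc Lc]] : exists c, t0 < c < b /\ nth None lbls c = Some (i, s').
  case: (Hy s' s'in) => [E|//]; by move: Hs'; rewrite E Hl.
have Hca : c < a.
  case: (ltngtP c a) => // H.
    have := Hno c H ltac:(lia); by rewrite Lc /= Hs' eqxx.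
  by move: Lc; rewrite H La => -[E _]; move: Hij; rewrite E eqxx.
have Hsz : forall k, t0.+1 <= k <= t0.+1 + (a - t0.+1) ->
    size Rb < size (nth [::] sts k).
  by move=> k Hk; apply: Hs; lia.
have [X [p' [Hp' [Ek Hy']]]] := fwd Hex E1 (a - t0.+1) ltac:(lia) Hsz.
have Ea : t0.+1 + (a - t0.+1) = a by lia.
rewrite Ea ESa in Ek.
case: X Ek => [|y X'] /= Ek.
  by case: Ek => E _; move: Hij; rewrite E eqxx.
case: Ek => Ey Er.
have := okst_inv Hex a (ltnW (ltn_trans Hab Hb)); rewrite ESa Er => /okst_above.
by [].
Qed.
Arguments load_case {I P prio sts lbls v i j l s a b}.


Theorem theorem2 (I : finType) (P : I -> cfg) (prio : I -> int)
    (v : nat) (i j : I) (l s : nat) :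
  act (P i) l = ALoad v ->
  act (P j) s = AStore v ->
  i != j ->
  (covered_load (P i) l v /\ intercepted_store (P j) s v) \/
  (covered_load (P i) l v /\ (prio j <= prio i)%R) \/
  (intercepted_store (P j) s v /\ (prio i <= prio j)%R) ->
  forall (sts : seq (stack I)) (lbls : seq (option (frame I))),
    execution P prio sts lbls ->
    forall a b : nat, ~ reads_from P lbls v j s a i l b.
Proof.
move=> _ _ Hij H sts lbls Hex a b Hrf.
case: H => [[Hc Hi]|[[Hc Hp]|[Hi Hp]]].
- have := load_case Hex Hij Hc Hrf => /ltW Hp.
  exact: store_case Hex Hij Hi Hp Hrf.
- have := load_case Hex Hij Hc Hrf; by rewrite ltNge Hp.
- exact: store_case Hex Hij Hi Hp Hrf.
Qed.
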